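(* Let $\nu>0$, $\Delta v>0$, $v_j=j\Delta v$ ($j\in\mathbb{Z}$). Let $\mathcal{Q}:(f_j)_j\mapsto(\mathcal{Q}_j(f))_j$ be either of the following discrete Fokker--Planck operators: (a) (second order) $\mathcal{Q}_j(f)=\frac{1}{\Delta v}\big[f_{j+1/2}(v_{j+1/2}-\tilde u)-f_{j-1/2}(v_{j-1/2}-\tilde u)\big]+\frac{\tilde T}{\Delta v^2}(f_{j+1}-2f_j+f_{j-1})$, where $f_{j+1/2}=(f_{j+1}+f_j)/2$, $v_{j+1/2}=(v_j+v_{j+1})/2$, $n=\sum_j f_j\Delta v$, $n\tilde u=\sum_j v_{j+1/2}f_{j+1/2}\Delta v$, $n\tilde T=\sum_j(v_{j+1/2}-\tilde u)^2f_{j+1/2}\Delta v$; (b) (fourth order) $\mathcal{Q}_j(f)=\bar Q^{[4]}_j-\frac{1}{24}[Q_{j+1}-2Q_j+Q_{j-1}]$, where $Q_j$ is the operator in (a), $\breve f_{j+1/2}=-\frac1{16}f_{j-1}+\frac9{16}f_j+\frac9{16}f_{j+1}-\frac1{16}f_{j+2}$, $n\breve u=\Delta v\sum_j v_{j+1/2}\breve f_{j+1/2}$, $n\breve T=\Delta v\sum_j(v_{j+1/2}-\breve u)^2\breve f_{j+1/2}$, and $\bar Q^{[4]}_j=\frac{(v_{j+1/2}-\breve u)\breve f_{j+1/2}-(v_{j-1/2}-\breve u)\breve f_{j-1/2}}{\Delta v}+\breve T\frac{-f_{j-2}+28f_{j-1}-54f_j+28f_{j+1}-f_{j+2}}{24\Delta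 v^2}$. Discretize $\partial_t f=\nu\mathcal{Q}(f)$ in time with time step $\Delta t>0$ and $s\ge 2$ stages by either RKC1: $K^{(0)}=f^n$, $K^{(1)}=K^{(0)}+\mu_1\Delta t\,\nu\mathcal{Q}(K^{(0)})$, $K^{(\ell)}=\kappa_\ell K^{(\ell-2)}+\nu_\ell K^{(\ell-1)}+\mu_\ell\Delta t\,\nu\mathcal{Q}(K^{(\ell-1)})$ for $\ell=2,\dots,s$, $f^{n+1}=K^{(s)}$, with $\mu_1=\omega_1/\omega_0$, $\mu_\ell=2\omega_1T_{\ell-1}(\omega_0)/T_\ell(\omega_0)$, $\nu_\ell=2\omega_0T_{\ell-1}(\omega_0)/T_\ell(\omega_0)$, $\kappa_\ell=1-\nu_\ell$, $\omega_0=1+\eta/s^2$, $\omega_1=T_s(\omega_0)/T_s'(\omega_0)$, $\eta=0.05$; or RKC2: $K^{(0)}=f^n$, $K^{(1)}=K^{(0)}+\hat\mu_1\Delta t\,\nu\mathcal{Q}(K^{(0)})$, $K^{(\ell)}=(1-\hat\kappa_\ell-\hat\nu_\ell)K^{(0)}+\hat\kappa_\ell K^{(\ell-2)}+\hat\nu_\ell K^{(\ell-1)}+\hat\mu_\ell\Delta t\,\nu\mathcal{Q}(K^{(\ell-1)})-a_{\ell-1}\hat\mu_\ell\Delta t\,\nu\mathcal{Q}(K^{(0)})$ for $\ell=2,\dots,s$, $f^{n+1}=K^{(s)}$, with real coefficients $\hat\mu_\ell=2b_\ell\omega_2/b_{\ell-1}$, $\hat\nu_\ell=2b_\ell\omega_0/b_{\ell-1}$,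 $\hat\kappa_\ell=-b_\ell/b_{\ell-2}$, $b_\ell=T_\ell''(\omega_0)/(T_\ell'(\omega_0))^2$, $a_\ell=1-b_\ell T_\ell(\omega_0)$, $\omega_0=1+\eta/s^2$, $\omega_2=T_s'(\omega_0)/T_s''(\omega_0)$, $\eta=0.15$ (and $\hat\mu_1$ and any remaining low-index coefficients being fixed real constants of the method). Denote by $f^n_j$ the resulting approximation of $f(t^n,v_j)$ (assuming all sums involved converge absolutely and the moments $n,\tilde T,\breve T$ stay positive). Then for all $n\in\mathbb{N}$, $$\sum_j\begin{pmatrix}1\\ v_j\\ v_j^2/2\end{pmatrix}f^n_j=\sum_j\begin{pmatrix}1\\ v_j\\ v_j^2/2\end{pmatrix}f^0_j.$$
   Context: $T_k$ denotes the first-kind Chebyshev polynomial: $T_0(z)=1$, $T_1(z)=z$, $T_k(z)=2zT_{k-1}(z)-T_{k-2}(z)$ for $k\ge2$. These operators discretize the Fokker--Planck operator $Q(f)=\partial_v\big((v-u_f)f+T_f\partial_v f\big)$ with $u_f,T_f$ the mean velocity and temperature of $f$. *)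

(* Defs.v *)
From Stdlib Require Import Reals ZArith Lia.
From Coquelicot Require Import Coquelicot.
Open Scope R_scope.

Definition zsum (g : Z -> R) : R :=
  Series (fun n => g (Z.of_nat n)) + Series (fun n => g (- Z.of_nat n - 1)%Z).

Definition zsummable (g : Z -> R) : Prop :=
  ex_series (fun n => Rabs (g (Z.of_nat n))) /\
  ex_series (fun n => Rabs (g (- Z.of_nat n - 1)%Z)).

Definition vgrid (dv : R) (j : Z) : R := IZR j * dv.
Definition vhalf (dv : R) (j : Z) : R := (vgrid dv j + vgrid dv (j + 1)) / 2.

(** f_{j+1/2} = (f_{j+1} + f_j)/2, stored at index j. *)
Definition fhalf (f : Z -> R) (j : Z) : R := (f (j + 1)%Z + f j) / 2.

Definition dens (dv : R) (f : Z -> R) : R := zsum f * dv.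

Definition u2 (dv : R) (f : Z -> R) : R :=
  zsum (fun j => vhalf dv j * fhalf f j) * dv / dens dv f.
Definition T2 (dv : R) (f : Z -> R) : R :=
  zsum (fun j => (vhalf dv j - u2 dv f) ^ 2 * fhalf f j) * dv / dens dv f.

Definition Q2 (dv : R) (f : Z -> R) (j : Z) : R :=
  (fhalf f j * (vhalf dv j - u2 dv f)
   - fhalf f (j - 1) * (vhalf dv (j - 1) - u2 dv f)) / dv
  + T2 dv f / dv ^ 2 * (f (j + 1)%Z - 2 * f j + f (j - 1)%Z).

(** fourth order: breve f_{j+1/2}, stored at index j *)
Definition fbreve (f : Z -> R) (j : Z) : R :=
  - 1 / 16 * f (j - 1)%Z + 9 / 16 * f j + 9 / 16 * f (j + 1)%Z - 1 / 16 * f (j + 2)%Z.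
Definition u4 (dv : R) (f : Z -> R) : R :=
  dv * zsum (fun j => vhalf dv j * fbreve f j) / dens dv f.
Definition T4 (dv : R) (f : Z -> R) : R :=
  dv * zsum (fun j => (vhalf dv j - u4 dv f) ^ 2 * fbreve f j) / dens dv f.

Definition Qbar4 (dv : R) (f : Z -> R) (j : Z) : R :=
  ((vhalf dv j - u4 dv f) * fbreve f j
   - (vhalf dv (j - 1) - u4 dv f) * fbreve f (j - 1)) / dv
  + T4 dv f * (- f (j - 2)%Z + 28 * f (j - 1)%Z - 54 * f j + 28 * f (j + 1)%Z
               - f (j + 2)%Z) / (24 * dv ^ 2).

Definition Q4 (dv : R) (f : Z -> R) (j : Z) : R :=
  Qbar4 dv f j - 1 / 24 * (Q2 dv f (j + 1) - 2 * Q2 dv f j + Q2 dv f (j - 1)).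

Inductive op_kind := FP2 | FP4.

Definition Qop (k : op_kind) (dv : R) (f : Z -> R) : Z -> R :=
  match k with FP2 => Q2 dv f | FP4 => Q4 dv f end.

(** "all sums involved converge absolutely and the moments stay positive":
    absolute moments up to order 3 are finite, and n, T~ (and T breve) > 0. *)
Definition admissible (k : op_kind) (dv : R) (g : Z -> R) : Prop :=
  (forall p : nat, (p <= 3)%nat -> zsummable (fun j => vgrid dv j ^ p * g j)) /\
  0 < dens dv g /\ 0 < T2 dv g /\
  (match k with FP2 => True | FP4 => 0 < T4 dv g end).

Fixpoint cheb (k : nat) (z : R) : R :=
  match k with
  | O => 1
  | S k' => match k' with
            | O => z
            | S k'' => 2 * z * cheb k' z - cheb k'' z
            end
  end.
Definition cheb' (k : nat) (z : R) : R := Derive (cheb k) z.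
Definition cheb'' (k : nat) (z : R) : R := Derive_n (cheb k) 2 z.

Definition w0_1 (s : nat) : R := 1 + (5 / 100) / (INR s) ^ 2.
Definition w1_1 (s : nat) : R := cheb s (w0_1 s) / cheb' s (w0_1 s).
Definition mu1_1 (s : nat) : R := w1_1 s / w0_1 s.
Definition mu_1 (s l : nat) : R :=
  2 * w1_1 s * cheb (l - 1) (w0_1 s) / cheb l (w0_1 s).
Definition nu_1 (s l : nat) : R :=
  2 * w0_1 s * cheb (l - 1) (w0_1 s) / cheb l (w0_1 s).
Definition kappa_1 (s l : nat) : R := 1 - nu_1 s l.

(** RKC2 coefficients, eta = 0.15; b_0, b_1 and mu^_1 are the method's
    free low-index constants. *)
Definition w0_2 (s : nat) : R := 1 + (15 / 100) / (INR s) ^ 2.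
Definition w2_2 (s : nat) : R := cheb' s (w0_2 s) / cheb'' s (w0_2 s).
Definition bcoef (s : nat) (b0 b1 : R) (l : nat) : R :=
  match l with
  | O => b0
  | S O => b1
  | _ => cheb'' l (w0_2 s) / (cheb' l (w0_2 s)) ^ 2
  end.
Definition acoef (s : nat) (b0 b1 : R) (l : nat) : R :=
  1 - bcoef s b0 b1 l * cheb l (w0_2 s).
Definition muh (s : nat) (b0 b1 : R) (l : nat) : R :=
  2 * bcoef s b0 b1 l * w2_2 s / bcoef s b0 b1 (l - 1).
Definition nuh (s : nat) (b0 b1 : R) (l : nat) : R :=
  2 * bcoef s b0 b1 l * w0_2 s / bcoef s b0 b1 (l - 1).
Definition kappah (s : nat) (b0 b1 : R) (l : nat) : R :=
  - bcoef s b0 b1 l / bcoef s b0 b1 (l - 2).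

Inductive scheme := RKC1 | RKC2.

Definition lin2 (a : R) (f : Z -> R) (b : R) (g : Z -> R) : Z -> R :=
  fun j => a * f j + b * g j.

(** stages sch Q s c muh1 b0 b1 f l = (K^(l), K^(l+1)), with K^(0) = f and
    c = dt * nu (so c * Q(K) = dt * nu * Q(K)). *)
Fixpoint stages (sch : scheme) (Q : (Z -> R) -> (Z -> R)) (s : nat) (c : R)
    (muh1 b0 b1 : R) (f : Z -> R) (l : nat) : (Z -> R) * (Z -> R) :=
  match l with
  | O =>
    match sch with
    | RKC1 => (f, fun j => f j + mu1_1 s * c * Q f j)
    | RKC2 => (f, fun j => f j + muh1 * c * Q f j)
    end
  | S l' =>
    let (Km2, Km1) := stages sch Q s c muh1 b0 b1 f l' in
    let ell := (l' + 2)%nat in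
    (Km1,
     match sch with
     | RKC1 => fun j => kappa_1 s ell * Km2 j + nu_1 s ell * Km1 j
                       + mu_1 s ell * c * Q Km1 j
     | RKC2 => fun j =>
         (1 - kappah s b0 b1 ell - nuh s b0 b1 ell) * f j
         + kappah s b0 b1 ell * Km2 j + nuh s b0 b1 ell * Km1 j
         + muh s b0 b1 ell * c * Q Km1 j
         - acoef s b0 b1 (ell - 1) * muh s b0 b1 ell * c * Q f j
     end)
  end.

Definition stage sch Q s c muh1 b0 b1 f l : Z -> R :=
  fst (stages sch Q s c muh1 b0 b1 f l).

Definition rk_step sch Q s c muh1 b0 b1 (f : Z -> R) : Z -> R :=
  stage sch Q s c muh1 b0 b1 f s.

Fixpoint fsol sch Q s c muh1 b0 b1 (f0 : Z -> R) (n : nat) : Z -> R :=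
  match n with
  | O => f0
  | S n' => rk_step sch Q s c muh1 b0 b1 (fsol sch Q s c muh1 b0 b1 f0 n')
  end.

Definition mom0 (f : Z -> R) : R := zsum f.
Definition mom1 (dv : R) (f : Z -> R) : R := zsum (fun j => vgrid dv j * f j).
Definition mom2 (dv : R) (f : Z -> R) : R := zsum (fun j => vgrid dv j ^ 2 / 2 * f j).

(* Main.v *)
Require Import Defs.
From Stdlib Require Import Reals ZArith Lia Lra FunctionalExtensionality.
From Coquelicot Require Import Coquelicot.
Open Scope R_scope.

Lemma exs_Rabs_ext (a b : nat -> R) : (forall n, a n = b n) -> ex_series (fun n => Rabs (a n)) -> ex_series (fun n => Rabs (b n)).
Proof. intros H; apply ex_series_ext; intros; now rewrite H. Qed.

Lemma zsummable_ext g h : (forall j, g j = h j) -> zsummable g -> zsummable h.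
Proof. intros H [H1 H2]; split; (eapply exs_Rabs_ext; [intros; apply H | assumption]). Qed.

Lemma zsum_ext g h : (forall j, g j = h j) -> zsum g = zsum h.
Proof. intros H; now rewrite (functional_extensionality _ _ H). Qed.

Lemma exs_abs_plus (a b : nat -> R) : ex_series (fun n => Rabs (a n)) -> ex_series (fun n => Rabs (b n)) -> ex_series (fun n => Rabs (a n + b n)).
Proof.
  intros Ha Hb. apply (@ex_series_le R_AbsRing R_CompleteNormedModule _ (fun n => Rabs (a n) + Rabs (b n))).
  - intros n. unfold norm; simpl. unfold abs; simpl. rewrite Rabs_Rabsolu. apply Rabs_triang.
  - apply (ex_series_plus _ _ Ha Hb).
Qed.

Lemma exs_abs_scal (c : R) (a : nat -> R) : ex_series (fun n => Rabs (a n)) -> ex_series (fun n => Rabs (c * a n)).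
Proof.
  intros Ha. apply (ex_series_ext (fun n => scal (Rabs c) (Rabs (a n)))).
  - intros n. unfold scal; simpl. unfold mult; simpl. now rewrite Rabs_mult.
  - now apply (@ex_series_scal_l R_AbsRing R_NormedModule).
Qed.

Lemma zsummable_plus g h : zsummable g -> zsummable h -> zsummable (fun j => g j + h j).
Proof. intros [] []; split; now apply exs_abs_plus. Qed.
Lemma zsummable_scal c g : zsummable g -> zsummable (fun j => c * g j).
Proof. intros []; split; now apply exs_abs_scal. Qed.
Lemma zsummable_minus g h : zsummable g -> zsummable h -> zsummable (fun j => g j - h j).
Proof. intros. apply (zsummable_ext (fun j => g j + (-1) * h j)). intros; ring.
  apply zsummable_plus; auto. now apply zsummable_scal. Qed.

Lemma zsum_plus g h : zsummable g -> zsummable h -> zsum (fun j => g j + h j) = zsum g + zsum h.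
Proof. intros [H1 H2] [H3 H4]. unfold zsum.
  rewrite (Series_plus (fun n => g (Z.of_nat n))), (Series_plus (fun n => g (- Z.of_nat n - 1)%Z)); try ring;
  now apply ex_series_Rabs. Qed.
Lemma zsum_scal c g : zsum (fun j => c * g j) = c * zsum g.
Proof. unfold zsum. rewrite !Series_scal_l. ring. Qed.
Lemma zsum_minus g h : zsummable g -> zsummable h -> zsum (fun j => g j - h j) = zsum g - zsum h.
Proof. intros. rewrite (zsum_ext _ (fun j => g j + (-1) * h j)) by (intros; ring).
  rewrite zsum_plus; auto. rewrite zsum_scal; ring. now apply zsummable_scal. Qed.

Lemma zsummable_shift1 g : zsummable g -> zsummable (fun j => g (j + 1)%Z).
Proof. intros [H1 H2]; split.
  - apply ex_series_incr_1 in H1. eapply ex_series_ext; [|exact H1]. intros n.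
    cbv beta; f_equal; f_equal; lia.
  - apply ex_series_incr_1. eapply ex_series_ext; [|exact H2]. intros n.
    cbv beta; f_equal; f_equal; lia.
Qed.
Lemma zsummable_shiftm1 g : zsummable g -> zsummable (fun j => g (j - 1)%Z).
Proof. intros [H1 H2]; split.
  - apply ex_series_incr_1. eapply ex_series_ext; [|exact H1]. intros n.
    cbv beta; f_equal; f_equal; lia.
  - apply ex_series_incr_1 in H2. eapply ex_series_ext; [|exact H2]. intros n.
    cbv beta; f_equal; f_equal; lia.
Qed.
Lemma zsum_shift1 g : zsummable g -> zsum (fun j => g (j + 1)%Z) = zsum g.
Proof. intros [H1 H2]. apply ex_series_Rabs in H1. apply ex_series_Rabs in H2. unfold zsum.
  rewrite (Series_incr_1 (fun n => g (Z.of_nat n))) by auto.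
  rewrite (Series_incr_1 (fun n => g (- Z.of_nat n - 1 + 1)%Z)).
  2:{ apply ex_series_incr_1. eapply ex_series_ext; [|exact H2]. intros n; cbv beta; f_equal; lia. }
  rewrite (Series_ext (fun n => g (Z.of_nat n + 1)%Z) (fun k => g (Z.of_nat (S k)))) by (intros; cbv beta; f_equal; lia).
  rewrite (Series_ext (fun k => g (- Z.of_nat (S k) - 1 + 1)%Z) (fun n => g (- Z.of_nat n - 1)%Z)) by (intros; cbv beta; f_equal; lia).
  simpl. ring.
Qed.

Lemma zsummable_shift g k : zsummable g -> zsummable (fun j => g (j + k)%Z).
Proof. revert g. induction k using Z.peano_ind; intros g Hg.
  - eapply zsummable_ext; [|exact Hg]. intros; cbv beta; f_equal; lia.
  - apply IHk, zsummable_shift1 in Hg. eapply zsummable_ext; [|exact Hg]. intros; cbv beta; f_equal; lia.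
  - apply IHk, zsummable_shiftm1 in Hg. eapply zsummable_ext; [|exact Hg]. intros; cbv beta; f_equal; lia.
Qed.

Lemma zsum_shift g k : zsummable g -> zsum (fun j => g (j + k)%Z) = zsum g.
Proof. revert g. induction k using Z.peano_ind; intros g Hg.
  - apply zsum_ext. intros; cbv beta; f_equal; lia.
  - rewrite <- (IHk g Hg). rewrite <- (zsum_shift1 (fun j => g (j + k)%Z)) by (now apply zsummable_shift).
    apply zsum_ext; intros; cbv beta; f_equal; lia.
  - rewrite <- (IHk g Hg). set (h := fun j => g (j + Z.pred k)%Z).
    assert (Hh : zsummable h) by now apply zsummable_shift.
    rewrite <- (zsum_shift1 h Hh). apply zsum_ext; intros; unfold h; cbv beta; f_equal; lia.
Qed.

Lemma zsum_shift_gen h h2 k : zsummable h -> (forall j, h2 j = h (j + k)%Z) -> zsum h2 = zsum h.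
Proof. intros Hh E. rewrite (zsum_ext _ _ E). now apply zsum_shift. Qed.

Definition Good (d : nat) (g : Z -> R) : Prop :=
  forall p m, (p + d <= 3)%nat -> zsummable (fun j => IZR (j + m) ^ p * g j).

Lemma Good_ext d g h : (forall j, g j = h j) -> Good d g -> Good d h.
Proof. intros E H p m Hp. eapply zsummable_ext; [|apply (H p m Hp)]. intros; cbv beta; now rewrite E. Qed.
Lemma Good_plus d A B : Good d A -> Good d B -> Good d (fun j => A j + B j).
Proof. intros HA HB p m Hp. eapply zsummable_ext; [|apply zsummable_plus; [apply (HA p m Hp)|apply (HB p m Hp)]].
  intros; cbv beta; ring. Qed.
Lemma Good_scal d c A : Good d A -> Good d (fun j => c * A j).
Proof. intros HA p m Hp. eapply zsummable_ext; [|apply zsummable_scal with (c:=c); apply (HA p m Hp)].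
  intros; cbv beta; ring. Qed.
Lemma Good_opp d A : Good d A -> Good d (fun j => - A j).
Proof. intros H. eapply Good_ext; [|apply (Good_scal d (-1) A H)]. intros; cbv beta; ring. Qed.
Lemma Good_minus d A B : Good d A -> Good d B -> Good d (fun j => A j - B j).
Proof. intros HA HB. eapply Good_ext; [|apply (Good_plus d A _ HA (Good_opp d B HB))]. intros; cbv beta; ring. Qed.
Lemma Good_div d A c : Good d A -> Good d (fun j => A j / c).
Proof. intros H. eapply Good_ext; [|apply (Good_scal d (/ c) A H)]. intros; cbv beta; unfold Rdiv; ring. Qed.
Lemma Good_mono d d' g : (d <= d')%nat -> Good d g -> Good d' g.
Proof. intros Hd H p m Hp. apply H; lia. Qed.
Lemma Good_shift d g h : (forall j, h j = (j + h 0%Z)%Z) -> Good d g -> Good d (fun j => g (h j)).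
Proof. intros Eh H p m Hp.
  assert (Z := zsummable_shift _ (h 0%Z) (H p (m - h 0%Z)%Z Hp)).
  eapply zsummable_ext; [|exact Z]. intros j; cbv beta. rewrite (Eh j). f_equal. f_equal. f_equal. lia.
Qed.
Lemma Good_mulZ d g : Good d g -> Good (S d) (fun j => IZR j * g j).
Proof. intros H p m Hp.
  assert (H1 := H (S p) m ltac:(lia)). assert (H2 := H p m ltac:(lia)).
  eapply zsummable_ext; [|apply zsummable_minus; [exact H1 | apply zsummable_scal with (c := IZR m); exact H2]].
  intros j; cbv beta. rewrite plus_IZR. simpl. ring.
Qed.
Lemma Good_zs d g : Good d g -> (d <= 3)%nat -> zsummable g.
Proof. intros H Hd. eapply zsummable_ext; [|apply (H 0%nat 0%Z ltac:(lia))]. intros; simpl; ring. Qed.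

Lemma Good_base_aux p : forall g, (forall q, (q <= p)%nat -> zsummable (fun j => IZR j ^ q * g j)) ->
  forall m, zsummable (fun j => IZR (j + m) ^ p * g j).
Proof. induction p; intros g H m.
  - eapply zsummable_ext; [|apply (H 0%nat ltac:(lia))]. intros; simpl; ring.
  - assert (A1 := IHp (fun j => IZR j * g j) ltac:(intros q Hq; eapply zsummable_ext; [|apply (H (S q) ltac:(lia))]; intros; simpl; ring) m).
    assert (A2 := IHp g ltac:(intros q Hq; apply H; lia) m).
    eapply zsummable_ext; [|apply zsummable_plus; [exact A1 | apply zsummable_scal with (c := IZR m); exact A2]].
    intros j; cbv beta. rewrite plus_IZR. simpl. ring.
Qed.
Lemma Good_base g : (forall q, (q <= 3)%nat -> zsummable (fun j => IZR j ^ q * g j)) -> Good 0 g.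
Proof. intros H p m Hp. apply Good_base_aux. intros; apply H; lia. Qed.

Definition Poly (e : nat) (phi : Z -> R) : Prop :=
  forall d g, (e + d <= 3)%nat -> Good d g -> Good (e + d) (fun j => phi j * g j).

Lemma Poly_mono e e' A : (e <= e')%nat -> Poly e A -> Poly e' A.
Proof. intros He H d g Hd Hg. apply (Good_mono (e + d)); [lia|]. apply H; auto; lia. Qed.
Lemma Poly_const c : Poly 0 (fun _ => c).
Proof. intros d g Hd Hg. simpl. now apply Good_scal. Qed.
Lemma Poly_Z : Poly 1 (fun j => IZR j).
Proof. intros d g Hd Hg. simpl. now apply Good_mulZ. Qed.
Lemma Poly_plus e1 e2 A B : Poly e1 A -> Poly e2 B -> Poly (Nat.max e1 e2) (fun j => A j + B j).
Proof. intros HA HB d g Hd Hg. eapply Good_ext; [|apply (Good_plus _ (fun j => A j * g j) (fun j => B j * g j))].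
  2:{ apply (Good_mono (e1 + d)); [lia|]. apply HA; auto; lia. }
  2:{ apply (Good_mono (e2 + d)); [lia|]. apply HB; auto; lia. }
  intros; cbv beta; ring. Qed.
Lemma Poly_mul e1 e2 A B : Poly e1 A -> Poly e2 B -> Poly (e1 + e2) (fun j => A j * B j).
Proof. intros HA HB d g Hd Hg. rewrite <- Nat.add_assoc.
  eapply Good_ext; [|apply (HA (e2 + d)%nat (fun j => B j * g j)); [lia | apply HB; auto; lia]]. intros; cbv beta; ring. Qed.
Lemma Poly_opp e A : Poly e A -> Poly e (fun j => - A j).
Proof. intros H d g Hd Hg. eapply Good_ext; [| apply (Good_opp _ _ (H d g Hd Hg))]. intros; cbv beta; ring. Qed.
Lemma Poly_minus e1 e2 A B : Poly e1 A -> Poly e2 B -> Poly (Nat.max e1 e2) (fun j => A j - B j).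
Proof. intros HA HB d g Hd Hg. eapply Good_ext; [|apply (Poly_plus e1 e2 A (fun j => - B j) HA (Poly_opp _ _ HB) d g Hd Hg)].
  intros; cbv beta; ring. Qed.
Lemma Poly_div e A c : Poly e A -> Poly e (fun j => A j / c).
Proof. intros H d g Hd Hg. eapply Good_ext; [|apply (Good_scal _ (/ c) _ (H d g Hd Hg))].
  intros; cbv beta; unfold Rdiv; ring. Qed.
Lemma Poly_pow e A n : Poly e A -> Poly (n * e) (fun j => A j ^ n).
Proof. intros H. induction n.
  - intros d g Hd Hg. eapply Good_ext; [|apply (Poly_const 1 d g Hd Hg)]. intros; cbv beta; ring.
  - intros d g Hd Hg. eapply Good_ext; [|apply (Poly_mul e (n * e) A _ H IHn d g Hd Hg)]. intros; simpl; ring.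
Qed.
Lemma Poly_shift e p h : (forall j, h j = (j + h 0%Z)%Z) -> Poly e p -> Poly e (fun j => p (h j)).
Proof. intros Eh H d g Hd Hg.
  set (k := h 0%Z) in *.
  assert (Hg' : Good d (fun j => g (j - k)%Z)) by (apply (Good_shift d g (fun j => (j - k)%Z)); [intros; lia | auto]).
  assert (A := H d _ Hd Hg').
  assert (B := Good_shift _ _ (fun j => (j + k)%Z) ltac:(intros; simpl; lia) A).
  eapply Good_ext; [|exact B]. intros j; cbv beta. rewrite Eh. f_equal. f_equal. lia.
Qed.
Lemma Poly_Zh h : (forall j, h j = (j + h 0%Z)%Z) -> Poly 1 (fun j => IZR (h j)).
Proof. intros Eh. apply (Poly_shift 1 IZR h Eh Poly_Z). Qed.

Lemma Good_mul e d A B : Poly e A -> Good (d - e) B -> (e <= d)%nat -> (d <= 3)%nat -> Good d (fun j => A j * B j).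
Proof. intros HA HB H1 H2. replace d with (e + (d - e))%nat by lia. apply HA; auto; lia. Qed.
Lemma Good_mul_r e d A B : Poly e B -> Good (d - e) A -> (e <= d)%nat -> (d <= 3)%nat -> Good d (fun j => A j * B j).
Proof. intros HA HB H1 H2. eapply Good_ext; [|apply (Good_mul e d B A); auto]. intros; cbv beta; ring. Qed.

Lemma Poly_vgrid dv : Poly 1 (vgrid dv).
Proof. intros d g Hd Hg. eapply Good_ext; [|apply (Poly_mul 1 0 _ _ Poly_Z (Poly_const dv) d g Hd Hg)].
  intros; unfold vgrid; ring. Qed.
Lemma Poly_vhalf dv : Poly 1 (vhalf dv).
Proof. intros d g Hd Hg.
  eapply Good_ext; [|apply (Poly_plus 1 0 _ _ (Poly_mul 1 0 _ _ Poly_Z (Poly_const dv)) (Poly_const (dv/2)) d g Hd Hg)].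
  intros; unfold vhalf, vgrid; rewrite plus_IZR; simpl; field. Qed.

Ltac gbase := first
  [ refine (Good_mono 0 _ _ _ _); [lia | eassumption]
  | refine (Good_mono 1 _ _ _ _); [lia | eassumption]
  | refine (Good_mono 2 _ _ _ _); [lia | eassumption]
  | refine (Good_mono 3 _ _ _ _); [lia | eassumption] ].

Ltac pbase := first [exact (Poly_vhalf _) | exact (Poly_vgrid _) | eassumption].

Ltac poly := first [ refine (Poly_const _) | poly1 ]
with poly1 := lazymatch goal with
 | |- Poly _ (fun j => @?A j + @?B j) => refine (Poly_plus _ _ A B _ _); poly
 | |- Poly _ (fun j => @?A j - @?B j) => refine (Poly_minus _ _ A B _ _); poly
 | |- Poly _ (fun j => @?A j * @?B j) => refine (Poly_mul _ _ A B _ _); poly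
 | |- Poly _ (fun j => @?A j / ?c) => refine (Poly_div _ A c _); poly
 | |- Poly _ (fun j => @?A j ^ ?n) => refine (Poly_pow _ A n _); poly
 | |- Poly _ (fun j => - @?A j) => refine (Poly_opp _ A _); poly
 | |- Poly _ (fun j => IZR (@?h j)) => refine (Poly_Zh h _); intros; cbv beta; lia
 | |- Poly _ (fun j => ?p (@?h j)) => refine (Poly_shift _ p h _ _); [intros; cbv beta; lia | pbase]
 | |- _ => pbase
 end.

Ltac good := lazymatch goal with
 | |- Good _ (fun j => @?A j + @?B j) => refine (Good_plus _ A B _ _); good
 | |- Good _ (fun j => @?A j - @?B j) => refine (Good_minus _ A B _ _); good
 | |- Good _ (fun j => - @?A j) => refine (Good_opp _ A _); good
 | |- Good _ (fun j => @?A j / ?c) => refine (Good_div _ A c _); good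
 | |- Good _ (fun j => @?A j * @?B j) =>
     first [ refine (Good_mul _ _ A B _ _ _ _); [poly | good | lia | lia]
           | refine (Good_mul_r _ _ A B _ _ _ _); [poly | good | lia | lia] ]
 | |- Good _ (fun j => ?p (@?h j)) => refine (Good_shift _ p h _ _); [intros; cbv beta; lia | gbase]
 | |- _ => gbase
 end.

Ltac zs := refine (Good_zs 3 _ _ _); [good | lia].


Lemma div_mom phi F : zsummable (fun j => phi j * F j) -> zsummable (fun j => phi (j+1)%Z * F j) ->
  zsum (fun j => phi j * (F j - F (j - 1)%Z)) = zsum (fun j => (phi j - phi (j + 1)%Z) * F j).
Proof. intros H1 H2.
  assert (H3 : zsummable (fun j => phi j * F (j - 1)%Z)).
  { eapply zsummable_ext; [|apply (zsummable_shift _ (-1) H2)]. intros j; cbv beta.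
    replace (j + -1 + 1)%Z with j by lia. replace (j + -1)%Z with (j - 1)%Z by lia. reflexivity. }
  rewrite (zsum_ext _ (fun j => phi j * F j - phi j * F (j - 1)%Z)) by (intros; ring).
  rewrite (zsum_ext (fun j => (phi j - phi (j + 1)%Z) * F j) (fun j => phi j * F j - phi (j+1)%Z * F j)) by (intros; ring).
  rewrite !zsum_minus by auto.
  f_equal. apply (zsum_shift_gen _ _ (-1) H2). intros j; cbv beta.
  replace (j + -1 + 1)%Z with j by lia. replace (j + -1)%Z with (j - 1)%Z by lia. reflexivity.
Qed.

Lemma shift_mom phi g k : (zsummable (fun j => phi (j - k)%Z * g j)) ->
  zsummable (fun j => phi j * g (j + k)%Z) /\
  zsum (fun j => phi j * g (j + k)%Z) = zsum (fun j => phi (j - k)%Z * g j).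
Proof. intros H. split.
  - eapply zsummable_ext; [|apply (zsummable_shift _ k H)]. intros j; cbv beta.
    replace (j + k - k)%Z with j by lia. reflexivity.
  - apply (zsum_shift_gen _ _ k H). intros j; cbv beta. replace (j + k - k)%Z with j by lia. reflexivity.
Qed.

Lemma sten5 phi g a b c d e :
  (forall k, (-2 <= k <= 2)%Z -> zsummable (fun j => phi (j + k)%Z * g j)) ->
  zsum (fun j => phi j * (a * g (j - 2)%Z + b * g (j - 1)%Z + c * g j + d * g (j + 1)%Z + e * g (j + 2)%Z))
  = zsum (fun j => (a * phi (j + 2)%Z + b * phi (j + 1)%Z + c * phi j + d * phi (j - 1)%Z + e * phi (j - 2)%Z) * g j).
Proof. intros H.
  assert (S : forall k, (-2 <= k <= 2)%Z -> zsummable (fun j => phi j * g (j + k)%Z) /\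
     zsum (fun j => phi j * g (j + k)%Z) = zsum (fun j => phi (j + - k)%Z * g j)).
  { intros k Hk. apply shift_mom. eapply zsummable_ext; [|apply (H (-k)%Z); lia]. intros; reflexivity. }
  destruct (S (-2)%Z ltac:(lia)) as [Sa Ea]. destruct (S (-1)%Z ltac:(lia)) as [Sb Eb].
  destruct (S 0%Z ltac:(lia)) as [Sc Ec]. destruct (S 1%Z ltac:(lia)) as [Sd Ed].
  destruct (S 2%Z ltac:(lia)) as [Se Ee].
  rewrite (zsum_ext _ (fun j => a * (phi j * g (j + -2)%Z) + b * (phi j * g (j + -1)%Z) + c * (phi j * g (j + 0)%Z)
     + d * (phi j * g (j + 1)%Z) + e * (phi j * g (j + 2)%Z))).
  2:{ intros j. replace (j + -2)%Z with (j - 2)%Z by lia. replace (j + -1)%Z with (j - 1)%Z by lia.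
      replace (j + 0)%Z with j by lia. ring. }
  rewrite (zsum_ext (fun j => (a * phi (j + 2)%Z + b * phi (j + 1)%Z + c * phi j + d * phi (j - 1)%Z + e * phi (j - 2)%Z) * g j)
     (fun j => a * (phi (j + 2)%Z * g j) + b * (phi (j + 1)%Z * g j) + c * (phi (j + 0)%Z * g j)
     + d * (phi (j + -1)%Z * g j) + e * (phi (j + -2)%Z * g j))).
  2:{ intros j. replace (j + 0)%Z with j by lia. replace (j + -1)%Z with (j - 1)%Z by lia.
      replace (j + -2)%Z with (j - 2)%Z by lia. ring. }
  assert (H2 := H 2%Z ltac:(lia)). assert (H1 := H 1%Z ltac:(lia)). assert (H0 := H 0%Z ltac:(lia)).
  assert (Hm1 := H (-1)%Z ltac:(lia)). assert (Hm2 := H (-2)%Z ltac:(lia)).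
  repeat rewrite zsum_plus; repeat apply zsummable_plus; try apply zsummable_scal; auto.
  rewrite !zsum_scal. rewrite Ea, Eb, Ec, Ed, Ee.
  repeat f_equal; apply functional_extensionality; intros j; f_equal; f_equal; lia.
Qed.

Ltac zring := intros; cbv beta; unfold vhalf; unfold vgrid; repeat rewrite ?plus_IZR, ?minus_IZR, ?opp_IZR; first [ring | (field; try lra)].

Lemma Q2_phi dv g phi : 0 < dv -> Good 0 g -> Poly 2 phi ->
  zsum (fun j => phi j * Q2 dv g j) =
  / dv * zsum (fun j => (phi j - phi (j+1)%Z) * (fhalf g j * (vhalf dv j - u2 dv g)))
  + T2 dv g / dv ^ 2 * zsum (fun j => (0 * phi (j+2)%Z + 1 * phi (j+1)%Z + -2 * phi j + 1 * phi (j-1)%Z + 0 * phi (j-2)%Z) * g j).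
Proof. intros Hdv Hg Hphi.
  rewrite (zsum_ext _ (fun j => / dv * (phi j * (fhalf g j * (vhalf dv j - u2 dv g) - fhalf g (j - 1)%Z * (vhalf dv (j - 1)%Z - u2 dv g)))
     + T2 dv g / dv ^ 2 * (phi j * (0 * g (j - 2)%Z + 1 * g (j - 1)%Z + -2 * g j + 1 * g (j + 1)%Z + 0 * g (j + 2)%Z)))).
  2:{ intros j. unfold Q2. field. lra. }
  unfold fhalf.
  rewrite zsum_plus by zs. rewrite !zsum_scal.
  rewrite div_mom by zs. rewrite sten5 by (intros; cbv beta; zs). reflexivity.
Qed.

Lemma zsum_zero h : (forall j, h j = 0) -> zsum h = 0.
Proof. intros H. rewrite (zsum_ext h (fun j => 0 * h j)) by (intros; rewrite H; ring).
  rewrite zsum_scal; ring. Qed.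

Lemma Good_fhalf g : Good 0 g -> Good 0 (fhalf g).
Proof. intros Hg. eapply Good_ext; [|assert (H : Good 0 (fun j => (g (j+1)%Z + g j) / 2)) by good; exact H].
  intros; reflexivity. Qed.

Lemma fhalf_sum g : Good 0 g -> zsum (fhalf g) = zsum g.
Proof. intros Hg. unfold fhalf.
  rewrite (zsum_ext _ (fun j => / 2 * g (j + 1)%Z + / 2 * g j)) by (intros; field).
  rewrite zsum_plus by zs. rewrite !zsum_scal. rewrite zsum_shift1 by zs. field. Qed.

Lemma Q2_mom dv g : 0 < dv -> Good 0 g -> zsum g <> 0 ->
  zsum (Q2 dv g) = 0 /\ zsum (fun j => vgrid dv j * Q2 dv g j) = 0 /\
  zsum (fun j => vgrid dv j ^ 2 / 2 * Q2 dv g j) = 0.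
Proof. intros Hdv Hg HS.
  assert (Hfg := Good_fhalf g Hg).
  assert (Hfh := fhalf_sum g Hg).
  assert (HF0 : zsum (fun j => fhalf g j * (vhalf dv j - u2 dv g)) = 0).
  { rewrite (zsum_ext _ (fun j => vhalf dv j * fhalf g j - u2 dv g * fhalf g j)) by (intros; ring).
    rewrite zsum_minus by zs. rewrite zsum_scal, Hfh. unfold u2, dens. field. split; lra. }
  assert (HT : T2 dv g * zsum g = zsum (fun j => vhalf dv j * (fhalf g j * (vhalf dv j - u2 dv g)))).
  { unfold T2 at 1.
    rewrite (zsum_ext (fun j => (vhalf dv j - u2 dv g) ^ 2 * fhalf g j)
       (fun j => vhalf dv j * (fhalf g j * (vhalf dv j - u2 dv g)) - u2 dv g * (fhalf g j * (vhalf dv j - u2 dv g)))) by (intros; ring).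
    rewrite zsum_minus by zs. rewrite zsum_scal, HF0. unfold dens. field. split; lra. }
  assert (P0 : Poly 2 (fun _ => 1)) by exact (Poly_mono 0 2 _ ltac:(lia) (Poly_const 1)).
  assert (P1 : Poly 2 (vgrid dv)) by exact (Poly_mono 1 2 _ ltac:(lia) (Poly_vgrid dv)).
  assert (P2 : Poly 2 (fun j => vgrid dv j ^ 2 / 2)) by (eapply Poly_mono; [|poly]; lia).
  split; [|split].
  - rewrite (zsum_ext (Q2 dv g) (fun j => (fun _ => 1) j * Q2 dv g j)) by (intros; ring).
    rewrite (Q2_phi dv g _ Hdv Hg P0). rewrite !zsum_zero by (intros; ring). ring.
  - rewrite (Q2_phi dv g _ Hdv Hg P1).
    rewrite (zsum_ext (fun j => (vgrid dv j - vgrid dv (j + 1)%Z) * _) (fun j => - dv * (fhalf g j * (vhalf dv j - u2 dv g)))) by zring.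
    rewrite zsum_scal, HF0. rewrite zsum_zero by zring. ring.
  - rewrite (Q2_phi dv g _ Hdv Hg P2).
    rewrite (zsum_ext (fun j => (_ - _) * _) (fun j => - dv * (vhalf dv j * (fhalf g j * (vhalf dv j - u2 dv g))))) by zring.
    rewrite (zsum_ext (fun j => (_ + _ + _ + _ + _) * g j) (fun j => dv ^ 2 * g j)) by zring.
    rewrite !zsum_scal, <- HT. field. lra.
Qed.

Lemma Good_fbreve g : Good 0 g -> Good 0 (fbreve g).
Proof. intros Hg. unfold fbreve. good. Qed.
Lemma Good_Q2 dv g : Good 0 g -> Good 1 (Q2 dv g).
Proof. intros Hg. assert (Hf := Good_fhalf g Hg). unfold Q2. good. Qed.

Lemma fbreve_sum g : Good 0 g -> zsum (fbreve g) = zsum g.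
Proof. intros Hg.
  rewrite (zsum_ext _ (fun j => (fun _ => 1) j * (0 * g (j - 2)%Z + (-1/16) * g (j - 1)%Z + 9/16 * g j + 9/16 * g (j + 1)%Z + (-1/16) * g (j + 2)%Z)))
    by (intros; unfold fbreve; field).
  rewrite sten5 by (intros; cbv beta; zs).
  apply zsum_ext. intros; field.
Qed.

Lemma Q4_phi dv g phi : 0 < dv -> Good 0 g -> Poly 2 phi ->
  zsum (fun j => phi j * Q4 dv g j) =
  / dv * zsum (fun j => (phi j - phi (j+1)%Z) * ((vhalf dv j - u4 dv g) * fbreve g j))
  + T4 dv g / (24 * dv ^ 2) * zsum (fun j => (-1 * phi (j+2)%Z + 28 * phi (j+1)%Z + -54 * phi j + 28 * phi (j-1)%Z + -1 * phi (j-2)%Z) * g j)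
  - 1 / 24 * zsum (fun j => (0 * phi (j+2)%Z + 1 * phi (j+1)%Z + -2 * phi j + 1 * phi (j-1)%Z + 0 * phi (j-2)%Z) * Q2 dv g j).
Proof. intros Hdv Hg Hphi.
  assert (Hb := Good_fbreve g Hg). assert (Hq := Good_Q2 dv g Hg).
  rewrite (zsum_ext _ (fun j => / dv * (phi j * ((vhalf dv j - u4 dv g) * fbreve g j - (vhalf dv (j - 1)%Z - u4 dv g) * fbreve g (j - 1)%Z))
     + T4 dv g / (24 * dv ^ 2) * (phi j * (-1 * g (j - 2)%Z + 28 * g (j - 1)%Z + -54 * g j + 28 * g (j + 1)%Z + -1 * g (j + 2)%Z))
     - 1 / 24 * (phi j * (0 * Q2 dv g (j - 2)%Z + 1 * Q2 dv g (j - 1)%Z + -2 * Q2 dv g j + 1 * Q2 dv g (j + 1)%Z + 0 * Q2 dv g (j + 2)%Z)))).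
  2:{ intros j. unfold Q4, Qbar4. field. lra. }
  rewrite zsum_minus by zs. rewrite zsum_plus by zs. rewrite !zsum_scal.
  rewrite div_mom by zs. rewrite !sten5 by (intros; cbv beta; zs). reflexivity.
Qed.

Lemma Q4_mom dv g : 0 < dv -> Good 0 g -> zsum g <> 0 ->
  zsum (Q4 dv g) = 0 /\ zsum (fun j => vgrid dv j * Q4 dv g j) = 0 /\
  zsum (fun j => vgrid dv j ^ 2 / 2 * Q4 dv g j) = 0.
Proof. intros Hdv Hg HS.
  assert (Hb := Good_fbreve g Hg).
  assert (Hfh := fbreve_sum g Hg).
  assert (HQ2 := Q2_mom dv g Hdv Hg HS).
  assert (HF0 : zsum (fun j => (vhalf dv j - u4 dv g) * fbreve g j) = 0).
  { rewrite (zsum_ext _ (fun j => vhalf dv j * fbreve g j - u4 dv g * fbreve g j)) by (intros; ring).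
    rewrite zsum_minus by zs. rewrite zsum_scal, Hfh. unfold u4, dens. field. split; lra. }
  assert (HT : T4 dv g * zsum g = zsum (fun j => vhalf dv j * ((vhalf dv j - u4 dv g) * fbreve g j))).
  { unfold T4 at 1.
    rewrite (zsum_ext (fun j => (vhalf dv j - u4 dv g) ^ 2 * fbreve g j)
       (fun j => vhalf dv j * ((vhalf dv j - u4 dv g) * fbreve g j) - u4 dv g * ((vhalf dv j - u4 dv g) * fbreve g j))) by (intros; ring).
    rewrite zsum_minus by zs. rewrite zsum_scal, HF0. unfold dens. field. split; lra. }
  assert (P2 : Poly 2 (fun j => vgrid dv j ^ 2 / 2)) by (eapply Poly_mono; [|poly]; lia).
  assert (P0 : Poly 2 (fun _ => 1)) by exact (Poly_mono 0 2 _ ltac:(lia) (Poly_const 1)).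
  assert (P1 : Poly 2 (vgrid dv)) by exact (Poly_mono 1 2 _ ltac:(lia) (Poly_vgrid dv)).
  split; [|split].
  - rewrite (zsum_ext (Q4 dv g) (fun j => (fun _ => 1) j * Q4 dv g j)) by (intros; ring).
    rewrite (Q4_phi dv g _ Hdv Hg P0). rewrite !zsum_zero by (intros; ring). ring.
  - rewrite (Q4_phi dv g _ Hdv Hg P1).
    rewrite (zsum_ext (fun j => (vgrid dv j - vgrid dv (j + 1)%Z) * _) (fun j => - dv * ((vhalf dv j - u4 dv g) * fbreve g j))) by zring.
    rewrite zsum_scal, HF0. rewrite !zsum_zero by zring. ring.
  - rewrite (Q4_phi dv g _ Hdv Hg P2).
    rewrite (zsum_ext (fun j => (_ - _) * _) (fun j => - dv * (vhalf dv j * ((vhalf dv j - u4 dv g) * fbreve g j)))) by zring.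
    rewrite (zsum_ext (fun j => (_ + _ + _ + _ + _) * g j) (fun j => (24 * dv ^ 2) * g j)) by zring.
    rewrite (zsum_ext (fun j => (_ + _ + _ + _ + _) * Q2 dv g j) (fun j => dv ^ 2 * Q2 dv g j)) by zring.
    rewrite !zsum_scal, <- HT. destruct HQ2 as [-> _]. field. lra.
Qed.

Lemma Good_Q4 dv g : Good 0 g -> Good 1 (Q4 dv g).
Proof. intros Hg. assert (Hb := Good_fbreve g Hg). assert (Hq := Good_Q2 dv g Hg).
  unfold Q4, Qbar4. good. Qed.

Lemma Good_adm k dv g : 0 < dv -> admissible k dv g -> Good 0 g.
Proof. intros Hdv [H _]. apply Good_base. intros q Hq.
  eapply zsummable_ext; [|apply (zsummable_scal (/ dv ^ q) _ (H q Hq))].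
  intros j; cbv beta. unfold vgrid. rewrite Rpow_mult_distr. field. apply pow_nonzero; lra. Qed.

Lemma adm_S k dv g : 0 < dv -> admissible k dv g -> zsum g <> 0.
Proof. intros Hdv [_ [H _]]. unfold dens in H. intros E; rewrite E in H; lra. Qed.

Definition wt (dv : R) (i : nat) (j : Z) : R :=
  match i with O => 1 | S O => vgrid dv j | _ => vgrid dv j ^ 2 / 2 end.

Lemma Poly_ext e A B : (forall j, A j = B j) -> Poly e A -> Poly e B.
Proof. intros E H d g Hd Hg. eapply Good_ext; [|apply (H d g Hd Hg)]. intros; cbv beta; now rewrite E. Qed.

Lemma Poly_wt dv i : Poly 2 (wt dv i).
Proof. destruct i as [|[|i]].
  - eapply Poly_ext; [|exact (Poly_mono 0 2 _ ltac:(lia) (Poly_const 1))]. intros; reflexivity.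
  - eapply Poly_ext; [|exact (Poly_mono 1 2 _ ltac:(lia) (Poly_vgrid dv))]. intros; reflexivity.
  - eapply Poly_ext; [|assert (P2 : Poly 2 (fun j => vgrid dv j ^ 2 / 2)) by (eapply Poly_mono; [|poly]; lia); exact P2].
    intros; reflexivity.
Qed.

Lemma Q_mom k dv g i : 0 < dv -> admissible k dv g -> zsum (fun j => wt dv i j * Qop k dv g j) = 0.
Proof. intros Hdv Ha. assert (Hg := Good_adm k dv g Hdv Ha). assert (HS := adm_S k dv g Hdv Ha).
  destruct k; simpl.
  - destruct (Q2_mom dv g Hdv Hg HS) as [H0 [H1 H2]]. destruct i as [|[|i]]; simpl; auto.
    rewrite <- H0. apply zsum_ext; intros; ring.
  - destruct (Q4_mom dv g Hdv Hg HS) as [H0 [H1 H2]]. destruct i as [|[|i]]; simpl; auto.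
    rewrite <- H0. apply zsum_ext; intros; ring.
Qed.

Lemma Good_Qop k dv g : Good 0 g -> Good 1 (Qop k dv g).
Proof. intros Hg. destruct k; simpl; [apply Good_Q2 | apply Good_Q4]; auto. Qed.

Lemma lin5 phi c1 c2 c3 c4 c5 g1 g2 g3 g4 g5 : Poly 2 phi ->
  Good 1 g1 -> Good 1 g2 -> Good 1 g3 -> Good 1 g4 -> Good 1 g5 ->
  zsum (fun j => phi j * (c1 * g1 j + c2 * g2 j + c3 * g3 j + c4 * g4 j + c5 * g5 j)) =
  c1 * zsum (fun j => phi j * g1 j) + c2 * zsum (fun j => phi j * g2 j) + c3 * zsum (fun j => phi j * g3 j)
  + c4 * zsum (fun j => phi j * g4 j) + c5 * zsum (fun j => phi j * g5 j).
Proof. intros Hp H1 H2 H3 H4 H5.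
  rewrite (zsum_ext _ (fun j => c1 * (phi j * g1 j) + c2 * (phi j * g2 j) + c3 * (phi j * g3 j)
    + c4 * (phi j * g4 j) + c5 * (phi j * g5 j))) by (intros; ring).
  repeat rewrite zsum_plus by zs. rewrite !zsum_scal. reflexivity.
Qed.

Definition Cons dv (g f : Z -> R) : Prop :=
  forall i, zsum (fun j => wt dv i j * g j) = zsum (fun j => wt dv i j * f j).

Lemma stages_cons k sch dv s c muh1 b0 b1 f : 0 < dv ->
  (forall l, (l <= s)%nat -> admissible k dv (stage sch (Qop k dv) s c muh1 b0 b1 f l)) ->
  forall l, (S l <= s)%nat ->
  Cons dv (fst (stages sch (Qop k dv) s c muh1 b0 b1 f l)) f /\
  Cons dv (snd (stages sch (Qop k dv) s c muh1 b0 b1 f l)) f.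
Proof. intros Hdv Hadm.
  assert (Af : admissible k dv f) by (destruct sch; apply (Hadm 0%nat); lia).
  assert (Gf := Good_adm _ _ _ Hdv Af).
  assert (GQf := Good_Qop k dv f Gf).
  induction l as [|l IH]; intros Hl.
  - destruct sch; simpl; split; intros i; try reflexivity.
    + rewrite (zsum_ext _ (fun j => wt dv i j * (1 * f j + (mu1_1 s * c) * Qop k dv f j + 0 * f j + 0 * f j + 0 * f j))) by (intros; ring).
      rewrite lin5; try apply Poly_wt; try gbase. rewrite (Q_mom k dv f i Hdv Af). ring.
    + rewrite (zsum_ext _ (fun j => wt dv i j * (1 * f j + (muh1 * c) * Qop k dv f j + 0 * f j + 0 * f j + 0 * f j))) by (intros; ring).
      rewrite lin5; try apply Poly_wt; try gbase. rewrite (Q_mom k dv f i Hdv Af). ring.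
  - destruct (IH ltac:(lia)) as [C2 C1].
    assert (A2 := Hadm l ltac:(lia)). assert (A1 := Hadm (S l) ltac:(lia)).
    unfold stage in A2, A1. simpl in A1 |- *.
    destruct (stages sch (Qop k dv) s c muh1 b0 b1 f l) as [Km2 Km1] eqn:E.
    simpl in *.
    assert (G2 := Good_adm _ _ _ Hdv A2). assert (G1 := Good_adm _ _ _ Hdv A1).
    assert (GQ1 := Good_Qop k dv Km1 G1).
    split; [exact C1|]. intros i.
    destruct sch.
    + rewrite (zsum_ext _ (fun j => wt dv i j * (kappa_1 s (l + 2) * Km2 j + nu_1 s (l + 2) * Km1 j
         + (mu_1 s (l + 2) * c) * Qop k dv Km1 j + 0 * f j + 0 * f j))) by (intros; ring).
      rewrite lin5; try apply Poly_wt; try gbase. rewrite (Q_mom k dv Km1 i Hdv A1), C1, C2.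
      unfold kappa_1. ring.
    + rewrite (zsum_ext _ (fun j => wt dv i j * ((1 - kappah s b0 b1 (l + 2) - nuh s b0 b1 (l + 2)) * f j
         + kappah s b0 b1 (l + 2) * Km2 j + nuh s b0 b1 (l + 2) * Km1 j
         + (muh s b0 b1 (l + 2) * c) * Qop k dv Km1 j
         + (- (acoef s b0 b1 (l + 2 - 1) * muh s b0 b1 (l + 2) * c)) * Qop k dv f j))) by (intros; ring).
      rewrite lin5; try apply Poly_wt; try gbase. rewrite (Q_mom k dv Km1 i Hdv A1), (Q_mom k dv f i Hdv Af), C1, C2.
      ring.
Qed.

Lemma stage_cons k sch dv s c muh1 b0 b1 f : 0 < dv ->
  (forall l, (l <= s)%nat -> admissible k dv (stage sch (Qop k dv) s c muh1 b0 b1 f l)) ->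
  forall l, (l <= s)%nat -> Cons dv (stage sch (Qop k dv) s c muh1 b0 b1 f l) f.
Proof. intros Hdv Hadm l Hl. destruct l as [|l].
  - unfold stage; destruct sch; simpl; intros i; reflexivity.
  - destruct (stages_cons k sch dv s c muh1 b0 b1 f Hdv Hadm l Hl) as [_ C].
    unfold stage. simpl. destruct (stages sch (Qop k dv) s c muh1 b0 b1 f l). exact C.
Qed.

Theorem proposition3 (k : op_kind) (sch : scheme) (nu dv dt : R) (s : nat)
  (muh1 b0 b1 : R) (f0 : Z -> R) :
  0 < nu -> 0 < dv -> 0 < dt -> (2 <= s)%nat ->
  (forall (n l : nat), (l <= s)%nat ->
     admissible k dv
       (stage sch (Qop k dv) s (dt * nu) muh1 b0 b1
          (fsol sch (Qop k dv) s (dt * nu) muh1 b0 b1 f0 n) l)) ->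
  forall n : nat,
    let fn := fsol sch (Qop k dv) s (dt * nu) muh1 b0 b1 f0 n in
    mom0 fn = mom0 f0 /\ mom1 dv fn = mom1 dv f0 /\ mom2 dv fn = mom2 dv f0.
Proof.
  intros Hnu Hdv Hdt Hs Hadm n fn.
  assert (C : Cons dv fn f0).
  { unfold fn. induction n as [|n IH].
    - intros i; reflexivity.
    - intros i. simpl. unfold rk_step. rewrite <- (IH i).
      apply (stage_cons k sch dv s _ muh1 b0 b1 _ Hdv (Hadm n) s ltac:(lia)). }
  split; [|split].
  - unfold mom0. rewrite (zsum_ext fn (fun j => wt dv 0 j * fn j)) by (intros; simpl; ring).
    rewrite (zsum_ext f0 (fun j => wt dv 0 j * f0 j)) by (intros; simpl; ring). apply C.
  - apply (C 1%nat).
  - apply (C 2%nat).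
Qed.
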